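(* For every formula $\varphi$, if $\vdash_{\mathbf{PTKv}^{+}}\varphi$ then $\varphi$ is valid (true at every world of every model).
   Context: Fix a countable set $\mathsf{Prop}$ of propositional variables, a countable set $\mathsf{Term}$ of atomic terms, and a finite set of agents $\mathcal{A}=\{1,\dots,n\}$. Let $\Theta_K=[0,1]\cap\mathbb{Q}$ and $\Theta_V^+=(\frac12,1]\cap\mathbb{Q}$. Formulas are generated by $\varphi::= p\mid t=s\mid\neg\varphi\mid(\varphi\to\psi)\mid K_i^\theta\varphi\mid Kv_i^\eta(t)$ with $p\in\mathsf{Prop}$, $t,s\in\mathsf{Term}$, $i\in\mathcal{A}$, $\theta\in\Theta_K$, $\eta\in\Theta_V^+$; other connectives are standard abbreviations. A model is $M=(W,D,\{P_i\}_{i\in\mathcal{A}},V,\mathsf{val})$ with $W\neq\emptyset$, $D\neq\emptyset$, $P_i(w)$ a countably additive probability measure on the powerset of $W$ for each $i,w$, $V:W\times\mathsf{Prop}\to\{0,1\}$, $\mathsf{val}:W\times\mathsf{Term}\to D$. Write $\llbracket\varphi\rrbracket^M=\{u\mid M,u\models\varphi\}$ and $\llbracket t=d\rrbracket^M=\{u\mid \mathsf{val}(u,t)=d\}$. Satisfaction: $M,w\models p$ iff $V(w,p)=1$; $M,w\models t=s$ iff $\mathsf{val}(w,t)=\mathsf{val}(w,s)$; Boolean clauses as usual; $M,w\models K_i^\theta\varphi$ iff $P_i(w)(\llbracket\varphi\rrbracket^M)\ge\theta$; $M,w\models Kv_i^\eta(t)$ iff there exists a unique $d\in D$ with $P_i(w)(\llbracket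 t=d\rrbracket^M)\ge\eta$. The system $\mathbf{PTKv}^{-}$ has rules Modus Ponens and $\mathrm{Nec}_K$ (from $\varphi$ infer $K_i^\theta\varphi$, for all $i\in\mathcal{A}$, $\theta\in\Theta_K$), and axiom schemata (for all agents $i$, terms $t,s,u$, formulas $\varphi,\psi$): all propositional tautologies; $t=t$; $t=s\to s=t$; $(t=s\wedge s=u)\to t=u$; $t=s\to((t=u)\leftrightarrow(s=u))$; $K_i^{\theta'}\varphi\to K_i^\theta\varphi$ for $\theta\le\theta'$ in $\Theta_K$; $K_i^\alpha(\varphi\to\psi)\to(K_i^\beta\varphi\to K_i^{\max\{0,\alpha+\beta-1\}}\psi)$ for $\alpha,\beta\in\Theta_K$; $K_i^\alpha\varphi\to\neg K_i^\beta\neg\varphi$ for $\alpha+\beta>1$; $K_i^0\varphi$; $K_i^1(t=s)\to(K_i^\theta(t=u)\leftrightarrow K_i^\theta(s=u))$ for $\theta\in\Theta_K$; $K_i^1(t=s)\to(Kv_i^\eta(t)\leftrightarrow Kv_i^\eta(s))$ for $\eta\in\Theta_V^+$. The system $\mathbf{PTKv}^{+}$ is $\mathbf{PTKv}^{-}$ plus the schemata: $K_i^1(\varphi\leftrightarrow\psi)\to(K_i^\theta\varphi\leftrightarrow K_i^\theta\psi)$ for $\theta\in\Theta_K$; $K_i^\alpha\varphi\wedge K_i^\beta\psi\wedge K_i^1\neg(\varphi\wedge\psi)\to K_i^{\alpha+\beta}(\varphi\vee\psi)$ for $\alpha,\beta\in\Theta_K$ with $\alpha+\beta\le1$; $Kv_i^\eta(t)\to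 Kv_i^\zeta(t)$ for $\eta,\zeta\in\Theta_V^+$ with $\zeta\le\eta$. *)

(* Defs.v *)
From Stdlib Require Import Reals QArith Qminmax Qreals.
Open Scope R_scope.

(* Propositional variables and atomic terms: both indexed by nat (countable).
   Agents: natural numbers i with i < n (i.e. n agents, 0-based). *)
Inductive form : Type :=
| PVar : nat -> form
| Eq   : nat -> nat -> form
| Neg  : form -> form
| Imp  : form -> form -> form
| K    : nat -> Q -> form -> form
| Kv   : nat -> Q -> nat -> form.

Definition And (a b : form) : form := Neg (Imp a (Neg b)).
Definition Or  (a b : form) : form := Imp (Neg a) b.
Definition Iff (a b : form) : form := And (Imp a b) (Imp b a).

Fixpoint wf (n : nat) (f : form) : Prop :=
  match f with
  | PVar _ => True
  | Eq _ _ => True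
  | Neg a => wf n a
  | Imp a b => wf n a /\ wf n b
  | K i th a => (i < n)%nat /\ (0 <= th)%Q /\ (th <= 1)%Q /\ wf n a
  | Kv i eta _ => (i < n)%nat /\ (1 # 2 < eta)%Q /\ (eta <= 1)%Q
  end.

(* Propositional tautologies: true under every Boolean valuation of the
   non-Boolean (atomic / modal) subformulas. *)
Fixpoint beval (v : form -> bool) (f : form) : bool :=
  match f with
  | Neg a => negb (beval v a)
  | Imp a b => implb (beval v a) (beval v b)
  | _ => v f
  end.

Definition tautology (f : form) : Prop := forall v, beval v f = true.

(* Axiom schemata of PTKv^+ (= PTKv^- plus the last three). *)
Inductive axiomPTKvplus : form -> Prop :=
| ax_taut phi : tautology phi -> axiomPTKvplus phi
| ax_refl t : axiomPTKvplus (Eq t t)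
| ax_sym t s : axiomPTKvplus (Imp (Eq t s) (Eq s t))
| ax_trans t s u : axiomPTKvplus (Imp (And (Eq t s) (Eq s u)) (Eq t u))
| ax_subst t s u : axiomPTKvplus (Imp (Eq t s) (Iff (Eq t u) (Eq s u)))
| ax_mono i th th' phi : (th <= th')%Q ->
    axiomPTKvplus (Imp (K i th' phi) (K i th phi))
| ax_K i a b phi psi :
    axiomPTKvplus (Imp (K i a (Imp phi psi))
                       (Imp (K i b phi) (K i (Qmax 0 (a + b - 1)) psi)))
| ax_cons i a b phi : (1 < a + b)%Q ->
    axiomPTKvplus (Imp (K i a phi) (Neg (K i b (Neg phi))))
| ax_zero i phi : axiomPTKvplus (K i 0 phi)
| ax_eqK i th t s u :
    axiomPTKvplus (Imp (K i 1 (Eq t s)) (Iff (K i th (Eq t u)) (K i th (Eq s u))))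
| ax_eqKv i eta t s :
    axiomPTKvplus (Imp (K i 1 (Eq t s)) (Iff (Kv i eta t) (Kv i eta s)))
| ax_ext i th phi psi :
    axiomPTKvplus (Imp (K i 1 (Iff phi psi)) (Iff (K i th phi) (K i th psi)))
| ax_add i a b phi psi : (a + b <= 1)%Q ->
    axiomPTKvplus (Imp (And (And (K i a phi) (K i b psi)) (K i 1 (Neg (And phi psi))))
                       (K i (a + b) (Or phi psi)))
| ax_Kvmono i eta zeta t : (zeta <= eta)%Q ->
    axiomPTKvplus (Imp (Kv i eta t) (Kv i zeta t)).

(* Derivability in PTKv^+ (all instances range over the language for n agents,
   i.e. well-formed formulas; parameter ranges are enforced by wf). *)
Inductive provable (n : nat) : form -> Prop :=
| pr_ax phi : wf n phi -> axiomPTKvplus phi -> provable n phi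
| pr_mp phi psi : provable n phi -> provable n (Imp phi psi) -> provable n psi
| pr_nec i th phi : (i < n)%nat -> (0 <= th)%Q -> (th <= 1)%Q ->
    provable n phi -> provable n (K i th phi).

Definition is_prob_measure (W : Type) (mu : (W -> Prop) -> R) : Prop :=
  (forall A, 0 <= mu A) /\
  mu (fun _ => True) = 1 /\
  (forall A : nat -> (W -> Prop),
      (forall j k x, j <> k -> A j x -> A k x -> False) ->
      infinite_sum (fun k => mu (A k)) (mu (fun x => exists k, A k x))).

Record model := Model {
  W : Type;
  D : Type;
  W_ne : inhabited W;
  D_ne : inhabited D;
  P : nat -> W -> (W -> Prop) -> R;
  P_prob : forall i w, is_prob_measure W (P i w);
  V : W -> nat -> bool;
  val : W -> nat -> D
}.

Fixpoint sat (M : model) (w : W M) (f : form) : Prop :=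
  match f with
  | PVar p => V M w p = true
  | Eq t s => val M w t = val M w s
  | Neg a => ~ sat M w a
  | Imp a b => sat M w a -> sat M w b
  | K i th a => P M i w (fun u => sat M u a) >= Q2R th
  | Kv i eta t => exists! d : D M, P M i w (fun u => val M u t = d) >= Q2R eta
  end.

Definition valid (f : form) : Prop := forall (M : model) (w : W M), sat M w f.

(* Main.v *)
Require Import Defs.
From Stdlib Require Import Reals QArith.
From Stdlib Require Import Qminmax Qreals Lra Classical ClassicalEpsilon
  FunctionalExtensionality PropExtensionality Lia.

Open Scope R_scope.

Lemma mu_ext (W : Type) (mu : (W -> Prop) -> R) (X Y : W -> Prop) :
  (forall x, X x <-> Y x) -> mu X = mu Y.
Proof.
  intro H. f_equal. apply functional_extensionality. intro x.
  apply propositional_extensionality. apply H.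
Qed.

Lemma mu_empty W mu : is_prob_measure W mu -> mu (fun _ => False) = 0.
Proof.
  intros [Hpos [Htot Hadd]].
  specialize (Hadd (fun _ _ => False)).
  assert (Hs : infinite_sum (fun _ => mu (fun _ => False)) (mu (fun _ => False))).
  { assert (E : mu (fun x => exists k : nat, (fun _ _ => False) k x) = mu (fun _ => False)).
    { apply mu_ext. intro x; split; [intros [k Hk]; exact Hk | intro H; destruct H]. }
    simpl in Hadd. simpl in E. rewrite E in Hadd. apply Hadd. intros; assumption. }
  set (c := mu (fun _ => False)) in *.
  assert (Hc : 0 <= c) by apply Hpos.
  destruct (Rle_lt_or_eq_dec 0 c Hc) as [Hlt|Heq]; [|auto].
  exfalso. destruct (Hs (c/2)) as [N HN]; [lra|].
  specialize (HN (S N) ltac:(lia)). rewrite sum_cte in HN.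
  unfold R_dist in HN. rewrite S_INR in HN. rewrite S_INR in HN.
  assert (0 <= INR N) by apply pos_INR.
  rewrite Rabs_right in HN; nra.
Qed.

Lemma mu_add2 W mu (X Y : W -> Prop) : is_prob_measure W mu ->
  (forall x, X x -> Y x -> False) ->
  mu (fun x => X x \/ Y x) = mu X + mu Y.
Proof.
  intros Hp Hd. pose proof (mu_empty W mu Hp) as He.
  destruct Hp as [Hpos [Htot Hadd]].
  set (A := fun k : nat => match k with 0%nat => X | 1%nat => Y | _ => fun _ : W => False end).
  assert (HA : forall j k x, j <> k -> A j x -> A k x -> False).
  { intros j k x Hjk Hj Hk. destruct j as [|[|j]]; destruct k as [|[|k]]; simpl in *;
    try contradiction; eauto. }
  specialize (Hadd A HA).
  assert (Hs : forall m, sum_f_R0 (fun k => mu (A k)) (S m) = mu X + mu Y).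
  { induction m. simpl. reflexivity. rewrite tech5. rewrite IHm. simpl. rewrite He. ring. }
  assert (Hcv : infinite_sum (fun k => mu (A k)) (mu X + mu Y)).
  { intros eps Heps. exists 1%nat. intros m Hm. destruct m; [lia|].
    rewrite Hs. unfold R_dist. rewrite Rminus_diag, Rabs_R0. lra. }
  rewrite (UL_sequence _ _ _ Hcv Hadd). apply mu_ext. intro x; split.
  - intros [Hx|Hx]; [exists 0%nat | exists 1%nat]; exact Hx.
  - intros [k Hk]. destruct k as [|[|k]]; simpl in Hk; auto. contradiction.
Qed.

Lemma mu_mono W mu (X Y : W -> Prop) : is_prob_measure W mu ->
  (forall x, X x -> Y x) -> mu X <= mu Y.
Proof.
  intros Hp Hxy.
  assert (mu Y = mu X + mu (fun x => Y x /\ ~ X x)).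
  { rewrite <- mu_add2 by (auto; intros x H1 [_ H2]; auto).
    apply mu_ext. intro x. split; [intro H|intros [H|[H _]]; auto].
    destruct (classic (X x)); auto. }
  destruct Hp as [Hpos _]. specialize (Hpos (fun x => Y x /\ ~ X x)). lra.
Qed.

Lemma mu_le1 W mu X : is_prob_measure W mu -> mu X <= 1.
Proof.
  intro Hp. pose proof Hp as [a [Ht b]]. rewrite <- Ht.
  apply mu_mono; auto.
Qed.

Lemma mu_compl W mu X : is_prob_measure W mu -> mu (fun x => ~ X x) = 1 - mu X.
Proof.
  intro Hp. assert (mu (fun x => X x \/ ~ X x) = 1).
  { pose proof Hp as [_ [Ht _]]. rewrite <- Ht. apply mu_ext. intro x.
    split; auto. intros _. apply classic. }
  rewrite mu_add2 in H by auto. lra.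
Qed.

Lemma mu_split W mu A B : is_prob_measure W mu ->
  mu A = mu (fun x => A x /\ B x) + mu (fun x => A x /\ ~ B x).
Proof.
  intro Hp. rewrite <- mu_add2 by (auto; intros x [_ H1] [_ H2]; auto).
  apply mu_ext. intro x. split; [intro H|intros [[H _]|[H _]]; auto].
  destruct (classic (B x)); auto.
Qed.

Lemma mu_null W mu E A : is_prob_measure W mu -> mu E >= 1 ->
  mu A = mu (fun x => A x /\ E x).
Proof.
  intros Hp HE. rewrite (mu_split W mu A E Hp).
  assert (mu (fun x => A x /\ ~ E x) <= mu (fun x => ~ E x)).
  { apply mu_mono; auto. intros x [_ H]; auto. }
  rewrite mu_compl in H by auto.
  destruct Hp as [Hpos _]. specialize (Hpos (fun x => A x /\ ~ E x)). lra.
Qed.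

Lemma mu_congr W mu E A B : is_prob_measure W mu -> mu E >= 1 ->
  (forall x, E x -> (A x <-> B x)) -> mu A = mu B.
Proof.
  intros Hp HE H. rewrite (mu_null W mu E A Hp HE), (mu_null W mu E B Hp HE).
  apply mu_ext. intro x. split; intros [H1 H2]; split; auto; apply (H x H2); auto.
Qed.

Lemma sat_And M w a b : sat M w (And a b) <-> sat M w a /\ sat M w b.
Proof.
  simpl. split.
  - intro H. destruct (classic (sat M w a)) as [Ha|Ha];
    [destruct (classic (sat M w b)) as [Hb|Hb]|]; tauto.
  - tauto.
Qed.

Lemma sat_Iff M w a b : sat M w (Iff a b) <-> (sat M w a <-> sat M w b).
Proof. unfold Iff. rewrite sat_And. simpl. tauto. Qed.

Lemma sat_Or M w a b : sat M w (Or a b) <-> sat M w a \/ sat M w b.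
Proof.
  simpl. split; [|tauto]. intro H. destruct (classic (sat M w a)); tauto.
Qed.

Lemma taut_sound M w f : tautology f -> sat M w f.
Proof.
  intro Ht.
  set (v := fun g => if excluded_middle_informative (sat M w g) then true else false).
  assert (Hv : forall g, beval v g = true <-> sat M w g).
  { induction g; simpl;
    try (unfold v; destruct excluded_middle_informative; split; intros; first [reflexivity|assumption|discriminate|contradiction]).
    - rewrite Bool.negb_true_iff, <- Bool.not_true_iff_false. tauto.
    - destruct (beval v g1), (beval v g2); simpl; intuition; try discriminate; exfalso; auto. }
  apply Hv, Ht.
Qed.

Lemma Q2R_1 : Q2R 1 = 1.
Proof. unfold Q2R. simpl. field. Qed.
Lemma Q2R_half : Q2R (1 # 2) = / 2.
Proof. unfold Q2R. simpl. field. Qed.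
Lemma Q2R_0' : Q2R 0 = 0.
Proof. unfold Q2R. simpl. field. Qed.

Lemma ax_sound n phi : wf n phi -> axiomPTKvplus phi -> valid phi.
Proof.
  intros Hwf Hax M w.
  pose proof (P_prob M) as Hp.
  destruct Hax; cbn -[And Iff Or] in *.
  - apply taut_sound; auto.
  - reflexivity.
  - auto.
  - intro H. apply sat_And in H. simpl in H. destruct H; congruence.
  - intro H. apply sat_Iff. simpl. rewrite H. tauto.
  - intro H1. apply Qle_Rle in H. lra.
  - intros H1 H2. set (a' := Q2R a) in *. set (b' := Q2R b) in *.
    assert (Hl : Q2R (Qmax 0 (a + b - 1)) = Rmax 0 (a' + b' - 1)).
    { destruct (Q.max_spec_le 0 (a + b - 1)) as [[Hle Heq]|[Hle Heq]];
      rewrite (Qeq_eqR _ _ Heq); apply Qle_Rle in Hle;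
      rewrite Q2R_minus, Q2R_plus, Q2R_1 in *; rewrite ?Q2R_0' in *;
      [rewrite Rmax_right | rewrite Rmax_left]; unfold a', b'; lra. }
    rewrite Hl. apply Rle_ge. apply Rmax_lub.
    + destruct (Hp i w) as [Hpos _]. apply Hpos.
    + pose proof (mu_split _ _ (fun u => sat M u phi) (fun u => sat M u phi -> sat M u psi) (Hp i w)) as Hs.
      assert (mu1 : P M i w (fun x => sat M x phi /\ (sat M x phi -> sat M x psi)) <= P M i w (fun u => sat M u psi)).
      { apply mu_mono; auto. intros x [Ha Hb]; auto. }
      assert (mu2 : P M i w (fun x => sat M x phi /\ ~ (sat M x phi -> sat M x psi)) <= P M i w (fun x => ~ (sat M x phi -> sat M x psi))).
      { apply mu_mono; auto. intros x [_ Hb]; auto. }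
      rewrite mu_compl in mu2 by auto. lra.
  - intros H1 H2. apply Qlt_Rlt in H. rewrite Q2R_plus, Q2R_1 in H.
    rewrite mu_compl in H2 by auto. lra.
  - rewrite Q2R_0'. destruct (Hp i w) as [Hpos _]. apply Rle_ge, Hpos.
  - intro H. apply sat_Iff. simpl.
    rewrite Q2R_1 in H.
    rewrite (mu_congr _ _ _ (fun x => val M x t = val M x u) (fun x => val M x s = val M x u) (Hp i w) H).
    + tauto.
    + simpl. intros x Hx. rewrite Hx. tauto.
  - intro H. apply sat_Iff. simpl.
    rewrite Q2R_1 in H.
    assert (Hd : forall d, P M i w (fun u => val M u t = d) = P M i w (fun u => val M u s = d)).
    { intro d. apply (mu_congr _ _ _ _ _ (Hp i w) H). simpl. intros x Hx. rewrite Hx. tauto. }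
    split; intros [d [Hd1 Hd2]]; exists d; split;
      [rewrite <- Hd; auto | intros d' Hd'; apply Hd2; rewrite Hd; auto
      | rewrite Hd; auto | intros d' Hd'; apply Hd2; rewrite <- Hd; auto].
  - intro H. apply sat_Iff. rewrite Q2R_1 in H.
    simpl. rewrite (mu_congr _ _ _ (fun u => sat M u phi) (fun u => sat M u psi) (Hp i w) H).
    + tauto.
    + intros x Hx. apply sat_Iff in Hx. exact Hx.
  - intro H0. apply sat_And in H0. destruct H0 as [H0 H3]. apply sat_And in H0.
    destruct H0 as [H1 H2]. simpl in H1, H2, H3. rewrite Q2R_1 in H3.
    rewrite Q2R_plus.
    assert (Heq : P M i w (fun u => sat M u (Or phi psi)) =
                  P M i w (fun u => sat M u phi \/ (sat M u psi /\ ~ sat M u phi))).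
    { apply mu_ext. intro x. rewrite sat_Or. split; [|tauto].
      intros [Ha|Hb]; auto. destruct (classic (sat M x phi)); tauto. }
    rewrite Heq, mu_add2 by (auto; intros x Ha [_ Hb]; auto).
    pose proof (mu_split _ _ (fun u => sat M u psi) (fun u => sat M u phi) (Hp i w)) as Hs.
    assert (Hz : P M i w (fun x => sat M x psi /\ sat M x phi) <= P M i w (fun x => ~ sat M x (Neg (And phi psi)))).
    { apply mu_mono; auto. intros x [Ha Hb] Hn. apply Hn, sat_And; auto. }
    rewrite mu_compl in Hz by auto.
    change (P M i w (fun u => sat M u (Neg (And phi psi))) >= 1) in H3.
    apply Qle_Rle in H. rewrite Q2R_plus, Q2R_1 in H.
    destruct (Hp i w) as [Hpos _]. specialize (Hpos (fun x => sat M x psi /\ sat M x phi)).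
    lra.
  - destruct Hwf as [[_ [Hh1 Hh2]] [_ [Hz1 Hz2]]].
    intros [d [Hd1 Hd2]]. apply Qle_Rle in H. apply Qlt_Rlt in Hz1. rewrite Q2R_half in Hz1.
    exists d. split; [lra|]. intros d' Hd'.
    destruct (classic (d = d')) as [E|E]; auto. exfalso.
    pose proof (mu_add2 _ _ (fun u => val M u t = d) (fun u => val M u t = d') (Hp i w)) as Ha.
    specialize (Ha ltac:(intros x e1 e2; congruence)).
    pose proof (mu_le1 _ _ (fun x => val M x t = d \/ val M x t = d') (Hp i w)) as Hl.
    simpl in Ha. rewrite Ha in Hl. lra.
Qed.

Theorem corollary1 (n : nat) (phi : form) : provable n phi -> valid phi.
Proof.
  induction 1.
  - eapply ax_sound; eauto.
  - intros M w. apply (IHprovable2 M w), IHprovable1.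
  - intros M w. simpl. apply Qle_Rle in H1. rewrite Q2R_1 in H1.
    destruct (P_prob M i w) as [_ [Ht _]].
    rewrite (mu_ext _ _ _ (fun _ => True)); [lra|]. intro x; split; auto.
Qed.
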